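(* Let $\mathbf{k}$ be a field and $f\in\mathrm{Aut}(\mathbb{A}^2_{\mathbf{k}})$ an automorphism of affine length $\ell_A(f)=n+1$ with $n\ge0$. Then there exist $\tau_1,\tau_2\in B$ and $i_1,\dots,i_n\in I$ such that $f=\tau_1\circ\sigma\circ i_1\circ\sigma\circ\cdots\circ\sigma\circ i_n\circ\sigma\circ\tau_2$. In particular $f^{-1}=\tau_2^{-1}\circ\sigma\circ i_n\circ\sigma\circ\cdots\circ\sigma\circ i_1\circ\sigma\circ\tau_1^{-1}$.
   Context: $A=\{(ax+by+c,a'x+b'y+c'): ab'-a'b\neq0\}$, $B=\{(ax+p(y),b'y+c'): a,b'\in\mathbf{k}^*, c'\in\mathbf{k}, p\in\mathbf{k}[y]\}$ (affine and Jonquières subgroups of $\mathrm{Aut}(\mathbb{A}^2_{\mathbf{k}})$), $\sigma=(y,x)$, and $I=\{(-x+p(y),y): p\in\mathbf{k}[y],\ \deg p\ge2\}$. Every $f$ admits an expression $f=t_1\circ a_1\circ t_2\circ\cdots\circ a_m\circ t_{m+1}$ with $a_i\in A\setminus(A\cap B)$, $t_1,t_{m+1}\in B$, $t_2,\dots,t_m\in B\setminus(A\cap B)$; the number $m$ is uniquely determined by $f$ and is its affine length $\ell_A(f)$. *)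

(* Defs.v *)
From mathcomp Require Import all_boot all_algebra.
From mathcomp Require Import mpoly.
Set Implicit Arguments. Unset Strict Implicit. Unset Printing Implicit Defensive.
Import GRing.Theory.
Local Open Scope ring_scope.

Section A2.
Variable k : fieldType.

(* A polynomial endomorphism of A^2_k: a pair of polynomials in k[x,y],
   with x = 'X_0 and y = 'X_1. *)
Definition endo := ({mpoly k[2]} * {mpoly k[2]})%type.

Definition X : {mpoly k[2]} := 'X_(@ord0 1).
Definition Y : {mpoly k[2]} := 'X_(@ord_max 1).

Definition ecomp (f g : endo) : endo :=
  (f.1 \mPo [tuple g.1; g.2], f.2 \mPo [tuple g.1; g.2]).

Definition eid : endo := (X, Y).

Definition ecomp_list (s : seq endo) : endo := foldr ecomp eid s.

Definition is_inverse (f g : endo) : Prop := ecomp f g = eid /\ ecomp g f = eid.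

Definition is_aut (f : endo) : Prop := exists g, is_inverse f g.

Definition in_y (p : {poly k}) : {mpoly k[2]} := \sum_(i < size p) p`_i *: Y ^+ i.

Definition inA (f : endo) : Prop :=
  exists a b c a' b' c' : k, a * b' - a' * b != 0 /\
    f = (a *: X + b *: Y + c%:MP, a' *: X + b' *: Y + c'%:MP).

Definition inB (f : endo) : Prop :=
  exists (a b' c' : k) (p : {poly k}), a != 0 /\ b' != 0 /\
    f = (a *: X + in_y p, b' *: Y + c'%:MP).

Definition inI (f : endo) : Prop :=
  exists p : {poly k}, (2 <= (size p).-1)%N /\ f = (- X + in_y p, Y).

Definition sigma : endo := (Y, X).

(* f = t1 o a1 o t2 o ... o a_m o t_{m+1}, with t1 = t0 and the list
   ats = [(a1,t2); ...; (a_m, t_{m+1})]. *)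
Definition affine_decomp (f : endo) (t0 : endo) (ats : seq (endo * endo)) : Prop :=
  [/\ f = ecomp_list (t0 :: flatten (map (fun q : endo * endo => [:: q.1; q.2]) ats)),
      inB t0,
      (forall q, q \in ats -> inA q.1 /\ ~ inB q.1),
      (forall q, q \in behead (rev ats) -> inB q.2 /\ ~ inA q.2) &
      (forall q, last None (map Some ats) = Some q -> inB q.2)].

(* l_A(f) = m : f admits an expression as above with m affine factors
   (m is uniquely determined by f, as recalled in the paper). *)
Definition affine_length_is (f : endo) (m : nat) : Prop :=
  exists t0 ats, size ats = m /\ affine_decomp f t0 ats.

End A2.

(* Main.v *)
Require Import Defs.
From mathcomp Require Import all_boot all_algebra.
From mathcomp Require Import mpoly.
From mathcomp Require Import ring.
Set Implicit Arguments. Unset Strict Implicit. Unset Printing Implicit Defensive.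
Import GRing.Theory.
Local Open Scope ring_scope.

Lemma comp_mpolyA (R : comRingType) (n m l : nat) (p : {mpoly R[n]})
   (lq : n.-tuple {mpoly R[m]}) (lr : m.-tuple {mpoly R[l]}) :
  (p \mPo lq) \mPo lr = p \mPo [tuple (tnth lq i) \mPo lr | i < n].
Proof.
rewrite [p \mPo lq]comp_mpolyE raddf_sum /= [RHS]comp_mpolyE; apply: eq_bigr => mm _.
rewrite linearZ /= rmorph_prod /=; congr (_ *: _); apply: eq_bigr => i _.
by rewrite rmorphXn /= tnth_mktuple.
Qed.

Section S.
Variable k : fieldType.
Lemma ecompA (f g h : endo k) : ecomp (ecomp f g) h = ecomp f (ecomp g h).
Proof.
rewrite /ecomp /= !comp_mpolyA.
have -> : [tuple tnth [tuple g.1; g.2] i \mPo [tuple h.1; h.2] | i < 2] =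
  [tuple g.1 \mPo [tuple h.1; h.2]; g.2 \mPo [tuple h.1; h.2]].
  by apply: eq_from_tnth => i; rewrite tnth_mktuple; case: i => [[|[|]]] //=.
by [].
Qed.
Lemma ecomp_idl (f : endo k) : ecomp (eid k) f = f.
Proof. by case: f => a b; rewrite /ecomp /eid /X /Y !comp_mpolyXU. Qed.
Lemma ecomp_idr (f : endo k) : ecomp f (eid k) = f.
Proof.
case: f => a b; rewrite /ecomp /eid /=.
have -> : [tuple X k; Y k] = [tuple 'X_i | i < 2].
  by apply: eq_from_tnth => i; rewrite tnth_mktuple; case: i => [[|[|]]] //= ?; rewrite /X /Y; congr (mpolyX _ _); apply: val_inj.
by rewrite !comp_mpoly_id.
Qed.
End S.
Section S.
Variable k : fieldType.
Definition ev (p : {poly k}) (v : {mpoly k[2]}) := (map_poly (@mpolyC 2 k) p).[v].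

Lemma evE p v : ev p v = \sum_(i < size p) p`_i *: v ^+ i.
Proof.
rewrite /ev horner_coef size_map_poly; apply: eq_bigr => i _.
by rewrite coef_map /= mul_mpolyC.
Qed.

Lemma in_yE p : in_y p = ev p (Y k).
Proof. by rewrite evE. Qed.

Lemma comp_in_y p (u v : {mpoly k[2]}) : in_y p \mPo [tuple u; v] = ev p v.
Proof.
rewrite evE /in_y raddf_sum /=; apply: eq_bigr => i _.
by rewrite linearZ /= rmorphXn /= /Y comp_mpolyXU.
Qed.

Lemma ev_comp p q v : ev (p \Po q) v = ev p (ev q v).
Proof. by rewrite /ev map_comp_poly horner_comp. Qed.

Lemma ev_lin p q a v : ev (a *: p + q) v = a *: ev p v + ev q v.
Proof.
by rewrite /ev rmorphD /= hornerD linearZ /= hornerZ mul_mpolyC.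
Qed.

Lemma ev_affine b c v : ev (b *: 'X + c%:P) v = b *: v + c%:MP.
Proof.
by rewrite /ev rmorphD /= linearZ /= map_polyX map_polyC /= hornerD hornerZ hornerX hornerC mul_mpolyC.
Qed.

Lemma ev0 v : ev 0 v = 0.
Proof. by rewrite /ev rmorph0 horner0. Qed.
Definition Bf a b c p : endo k := (a *: X k + in_y p, b *: Y k + c%:MP).

Lemma BcompE a b c p (h : endo k) :
  ecomp (Bf a b c p) h = (a *: h.1 + ev p h.2, b *: h.2 + c%:MP).
Proof.
case: h => h1 h2.
by rewrite /ecomp /Bf /= !raddfD /= !linearZ /= comp_in_y /X /Y !comp_mpolyXU comp_mpolyC.
Qed.

Lemma Bcomp a1 b1 c1 p1 a2 b2 c2 p2 :
  ecomp (Bf a1 b1 c1 p1) (Bf a2 b2 c2 p2) =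
  Bf (a1*a2) (b1*b2) (b1*c2+c1) (a1 *: p2 + (p1 \Po (b2 *: 'X + c2%:P))).
Proof.
rewrite BcompE /Bf /=.
rewrite !in_yE ev_lin ev_comp ev_affine.


congr (_, _); rewrite -!mul_mpolyC; rewrite ?mpolyCM ?mpolyCD; ring.
Qed.
Definition Bsz (P : nat -> Prop) (f : endo k) :=
  exists (a b c : k) (p : {poly k}), [/\ a != 0, b != 0, P (size p) & f = Bf a b c p].
Definition Blin := Bsz (fun s => (s <= 2)%N).
Definition Bbig := Bsz (fun s => (3 <= s)%N).

Lemma Bsz_inB P (f : endo k) : Bsz P f -> inB f.
Proof. by case=> a [b [c [p [? ? _ ->]]]]; exists a, b, c, p. Qed.

Lemma inB_Bsz (f : endo k) : inB f -> Bsz (fun _ => True) f.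
Proof. by case=> a [b [c [p [? [? ->]]]]]; exists a, b, c, p. Qed.

Lemma size_lin (b c : k) : (size (b *: 'X + c%:P)%R <= 2)%N.
Proof.
apply: (leq_trans (size_polyD (b *: 'X) c%:P)); rewrite geq_max.
by rewrite (leq_trans (size_scale_leq _ _)) ?size_polyX // (leq_trans (size_polyC_leq1 _)).
Qed.

Lemma size_lin2 (b c : k) : b != 0 -> size (b *: 'X + c%:P) = 2.
Proof.
by move=> nb; rewrite -mul_polyC size_MXaddC polyC_eq0 (negbTE nb) size_polyC nb.
Qed.

Lemma sizeComp_le (p : {poly k}) b c : (size p <= 2)%N ->
  (size (p \Po (b *: 'X + c%:P))%R <= 2)%N.
Proof.
move=> hp; apply: (leq_trans (size_comp_poly_leq _ _)).
have h1 := size_lin b c.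
have : ((size p).-1 <= 1)%N by rewrite -subn1 leq_subLR.
have : ((size (b *: 'X + c%:P)%R).-1 <= 1)%N by rewrite -subn1 leq_subLR.
move=> h2 h3; rewrite ltnS; apply: (leq_trans (leq_mul h3 h2)) => //.
Qed.

Lemma BB (f g : endo k) : inB f -> inB g -> inB (ecomp f g).
Proof.
case=> a1 [b1 [c1 [p1 [n1 [m1 ->]]]]] [a2 [b2 [c2 [p2 [n2 [m2 ->]]]]]].
rewrite Bcomp; do 4 eexists; split; [|split]; [exact: mulf_neq0 n1 n2| exact: mulf_neq0 m1 m2| by []].
Qed.

Lemma lin_big (f g : endo k) : Blin f -> Bbig g -> Bbig (ecomp f g).
Proof.
case=> a1 [b1 [c1 [p1 [n1 m1 s1 ->]]]] [a2 [b2 [c2 [p2 [n2 m2 s2 ->]]]]].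
rewrite Bcomp; do 4 eexists; split; last by [].
- by rewrite mulf_neq0.
- by rewrite mulf_neq0.
rewrite size_addl size_scale //.
exact: leq_ltn_trans (sizeComp_le _ _ s1) s2.
Qed.

Lemma big_lin (f g : endo k) : Bbig f -> Blin g -> Bbig (ecomp f g).
Proof.
case=> a1 [b1 [c1 [p1 [n1 m1 s1 ->]]]] [a2 [b2 [c2 [p2 [n2 m2 s2 ->]]]]].
rewrite Bcomp; do 4 eexists; split; last by [].
- by rewrite mulf_neq0.
- by rewrite mulf_neq0.
rewrite addrC size_addl size_comp_poly2 ?size_lin2 //.
exact: leq_ltn_trans (leq_trans (size_scale_leq _ _) s2) s1.
Qed.

Lemma poly_le2 (p : {poly k}) : (size p <= 2)%N -> p = (p`_1 *: 'X + (p`_0)%:P)%R.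
Proof.
move=> hp; apply/polyP => i; rewrite coefD coefZ coefX coefC.
case: i => [|[|i]] /=; rewrite ?mulr0 ?mulr1 ?add0r ?addr0 //.
by rewrite nth_default // (leq_trans hp).
Qed.

Lemma in_y_lin b c : in_y (b *: 'X + c%:P) = b *: Y k + c%:MP.
Proof. by rewrite in_yE ev_affine. Qed.

Lemma notA_big (t : endo k) : inB t -> ~ inA t -> Bbig t.
Proof.
case=> a [b [c [p [na [nb ->]]]]] nA.
case: (leqP 3 (size p)) => hs; first by exists a, b, c, p.
exfalso; apply: nA.
exists a, p`_1, p`_0, 0, b, c; split.
  by rewrite mul0r subr0 mulf_neq0.
rewrite /Bf {1}(poly_le2 hs) in_y_lin scale0r add0r addrA //.
Qed.
Lemma sigmaE (h : endo k) : ecomp (sigma k) h = (h.2, h.1).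
Proof. by case: h => h1 h2; rewrite /ecomp /sigma /X /Y !comp_mpolyXU. Qed.

Lemma sigma2 : ecomp (sigma k) (sigma k) = eid k.
Proof. by rewrite sigmaE. Qed.

Lemma split_aux (be a' b b' c c' : k) :
  ((be*a') *: X k + b *: Y k + c%:MP, a' *: X k + b' *: Y k + c'%:MP) =
  ecomp (Bf (b - be*b') 1 0 (be *: 'X + (c - be*c')%:P))
        (ecomp (sigma k) (Bf a' 1 0 (b' *: 'X + c'%:P))).
Proof.
rewrite sigmaE BcompE /Bf /= !in_y_lin ev_affine.
congr (_, _); rewrite -!mul_mpolyC ?mpolyC0 ?mpolyC1; rewrite ?mpolyCM ?mpolyCD ?mpolyCN ?mpolyCB; ring.
Qed.

Lemma split_A (a : endo k) : inA a -> ~ inB a ->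
  exists L R, [/\ Blin L, Blin R & a = ecomp L (ecomp (sigma k) R)].
Proof.
case=> [a0 [b [c [a' [b' [c' [hdet ->]]]]]]] nB.
have na' : a' != 0.
  apply/negP => /eqP ea; apply: nB; subst a'.
  move: hdet; rewrite mul0r subr0 mulf_eq0 negb_or => /andP[n1 n2].
  exists a0, b', c', (b *: 'X + c%:P); split => //; split => //.
  by rewrite /Bf in_y_lin scale0r add0r addrA.
pose be := a0 / a'.
have ha : a0 = be * a' by rewrite /be divfK.
rewrite ha split_aux.
exists (Bf (b - be*b') 1 0 (be *: 'X + (c - be*c')%:P)), (Bf a' 1 0 (b' *: 'X + c'%:P)).
split => //.
- exists (b - be*b'), 1, 0, (be *: 'X + (c - be*c')%:P); split; [|exact: oner_neq0|exact: size_lin|by []].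
  apply: contra hdet => /eqP h; apply/eqP.
  have hb : b = be * b' by apply/eqP; rewrite -subr_eq0 h.
  by rewrite ha hb; ring.
- exists a', 1, 0, (b' *: 'X + c'%:P); split; [by []|exact: oner_neq0|exact: size_lin|by []].
Qed.
Lemma comp_inv_lin (b c : k) : b != 0 ->
  (b^-1 *: 'X + (- (c / b))%:P) \Po (b *: 'X + c%:P) = 'X.
Proof.
move=> nb; rewrite comp_polyD comp_polyC comp_polyZ comp_polyX scalerDr scalerA mulVf //.
by rewrite scale1r scale_polyC -addrA -polyCD mulrC addrN addr0.
Qed.

Lemma decompD (t : endo k) : Bbig t -> exists i E,
  [/\ inI i, t = ecomp i E & Blin (ecomp (sigma k) (ecomp E (sigma k)))].
Proof.
case=> a [b [c [p [na nb sp ->]]]].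
pose q := p \Po (b^-1 *: 'X + (- (c / b))%:P).
have sq : size q = size p by rewrite size_comp_poly2 // size_lin2 // invr_eq0.
exists (Bf (-1) 1 0 q), (Bf (-a) b c 0); split.
- exists q; split; first by rewrite sq; case: (size p) sp => [|[|[|]]].
  by rewrite /Bf scaleN1r scale1r addr0.
- rewrite Bcomp scaler0 add0r -comp_polyA comp_inv_lin // comp_polyXr.
  by rewrite mulN1r opprK !mul1r addr0.
- rewrite BcompE sigmaE /= /sigma /= ev0 addr0.
  exists b, (-a), 0, c%:P; split => //; first by rewrite oppr_eq0.
    exact: leq_trans (size_polyC_leq1 _) _.
  by rewrite /Bf in_yE /ev map_polyC hornerC /= mpolyC0 addr0.
Qed.
Lemma ecomp_list_cat (s1 s2 : seq (endo k)) :
  ecomp_list (s1 ++ s2) = ecomp (ecomp_list s1) (ecomp_list s2).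
Proof.
elim: s1 => [|x s IH] /=; first by rewrite ecomp_idl.
by rewrite IH ecompA.
Qed.

Fixpoint good (ats : seq (endo k * endo k)) : Prop :=
  match ats with
  | [::] => True
  | q :: r => [/\ inA q.1 /\ ~ inB q.1, inB q.2,
                 (if r is [::] then True else ~ inA q.2) & good r]
  end.

Lemma behead_rcons (T : eqType) (s : seq T) y : s != [::] ->
  behead (rcons s y) = rcons (behead s) y.
Proof. by case: s. Qed.

Lemma decomp_good (ats : seq (endo k * endo k)) :
  (forall q, q \in ats -> inA q.1 /\ ~ inB q.1) ->
  (forall q, q \in behead (rev ats) -> inB q.2 /\ ~ inA q.2) ->
  (forall q, last None (map Some ats) = Some q -> inB q.2) ->
  good ats.
Proof.
elim: ats => [//|q r IH] HA HB HL /=.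
have HBr : forall q', q' \in behead (rev r) -> inB q'.2 /\ ~ inA q'.2.
  move=> q' hq'; apply: HB; rewrite rev_cons.
  case: (rev r) hq' => [//|x s] /= hq'.
  by rewrite mem_rcons inE hq' orbT.
have HLr : forall q', last None (map Some r) = Some q' -> inB q'.2.
  move=> q' hq'; apply: HL => /=; case: r hq' {IH HA HB HBr} => //.
split.
- by apply: HA; rewrite inE eqxx.
- case: r HB HL {IH HA HBr HLr} => [|q' r] HB HL; first by apply: HL.
  apply: (fun h => proj1 (HB q h)).
  rewrite rev_cons rev_cons behead_rcons; last by case: (rev r).
  by rewrite mem_rcons inE eqxx.
- case: r HB {IH HA HBr HLr HL} => [//|q' r] HB.
  apply: (fun h => proj2 (HB q h)).
  rewrite rev_cons rev_cons behead_rcons; last by case: (rev r).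
  by rewrite mem_rcons inE eqxx.
- apply: IH => // q' hq'; apply: HA; by rewrite inE hq' orbT.
Qed.
Definition pairs (ats : seq (endo k * endo k)) :=
  flatten (map (fun q : endo k * endo k => [:: q.1; q.2]) ats).
Definition Pj (js : seq (endo k)) (tau2 : endo k) :=
  ecomp_list (flatten (map (fun i => [:: i; sigma k]) js) ++ [:: tau2]).

Definition gcond (ats : seq (endo k * endo k)) (G : endo k) : Prop :=
  if ats is [::] then inB G else Bbig G.

Lemma Pj_cons j js t : Pj (j :: js) t = ecomp j (ecomp (sigma k) (Pj js t)).
Proof. by []. Qed.
Lemma pairs_cons q r : ecomp_list (pairs (q :: r)) =
  ecomp q.1 (ecomp q.2 (ecomp_list (pairs r))).
Proof. by []. Qed.

Lemma H_eq_gen (T : Type) (op : T -> T -> T) (e : T) (opA : forall x y z, op (op x y) z = op x (op y z))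
  (op1 : forall x, op e x = x) (G L S R q2 W i E : T) : op G L = op i E ->
  op S S = e ->
  op G (op (op L (op S R)) (op q2 W)) =
  op i (op S (op (op (op S (op E S)) (op R q2)) W)).
Proof.
move=> h1 h2.
rewrite !opA -(opA S S) h2 op1.
by rewrite -(opA G L) h1 !opA.
Qed.


Lemma H_lemma (ats : seq (endo k * endo k)) : forall G : endo k,
  good ats -> gcond ats G ->
  exists tau2 js, [/\ inB tau2, size js = size ats, (forall i, i \in js -> inI i) &
    ecomp G (ecomp_list (pairs ats)) = Pj js tau2].
Proof.
elim: ats => [|q r IH] G /=.
  move=> _ hG; exists G, [::]; split; [exact: hG|by []|by []|].
  by rewrite /Pj /pairs /= !ecomp_idr.
case=> [[hA nB] hq2 hr gr] hG.
have [L [R [hL hR eq1]]] := split_A hA nB.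
have [i [E [hi hGL hC]]] := decompD (big_lin hG hL).
set C := ecomp (sigma k) (ecomp E (sigma k)) in hC.
have hG' : gcond r (ecomp C (ecomp R q.2)).
  rewrite /gcond; case: r hr {IH gr} => [|q' r] hr.
    by apply: BB; [exact: Bsz_inB hC | apply: BB => //; exact: Bsz_inB hR].
  by apply: lin_big => //; apply: lin_big => //; apply: notA_big.
have [tau2 [js [ht2 hsz hjs heq]]] := IH _ gr hG'.
exists tau2, (i :: js); split; [exact: ht2| by rewrite /= hsz | |].
- by move=> j; rewrite inE => /orP[/eqP -> |]; [exact: hi | apply: hjs].
rewrite -/(pairs r) Pj_cons -heq eq1 /C.
apply: (@H_eq_gen _ (@ecomp k) (eid k)); [exact: ecompA|exact: ecomp_idl|exact: hGL|exact: sigma2].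
Qed.

Lemma inI_inv (j : endo k) : inI j -> ecomp j j = eid k.
Proof.
case=> p [_ ->].
have -> : (- X k + in_y p, Y k) = Bf (-1) 1 0 p by rewrite /Bf scaleN1r scale1r addr0.
rewrite Bcomp /Bf mulN1r opprK !mul1r.
rewrite !scale1r ?polyC0 !addr0 comp_polyXr scaleN1r addNr in_yE ev0 ?mpolyC0 ?addr0. by [].
Qed.

Definition Tj (js : seq (endo k)) := ecomp_list (flatten (map (fun i => [:: i; sigma k]) js)).

Lemma Pj_T js t : Pj js t = ecomp (Tj js) t.
Proof. by rewrite /Pj ecomp_list_cat /= ecomp_idr. Qed.

Lemma Tj_cons j js : Tj (j :: js) = ecomp j (ecomp (sigma k) (Tj js)).
Proof. by []. Qed.

Lemma Tj_rev_cons j js : Tj (rev (j :: js)) = ecomp (Tj (rev js)) (ecomp j (sigma k)).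
Proof.
by rewrite /Tj rev_cons -cats1 map_cat flatten_cat ecomp_list_cat /= ecomp_idr.
Qed.

Lemma key_gen (T : Type) (op : T -> T -> T) (e : T) (opA : forall x y z, op (op x y) z = op x (op y z))
  (op1 : forall x, op e x = x) (A S j B : T) :
  op S S = e -> op j j = e -> op A (op S B) = S ->
  op (op A (op j S)) (op S (op j (op S B))) = S.
Proof.
move=> hS hj hAB.
by rewrite !opA -(opA S S) hS op1 -(opA j j) hj op1.
Qed.

Lemma key (js : seq (endo k)) : (forall i, i \in js -> inI i) ->
  ecomp (Tj (rev js)) (ecomp (sigma k) (Tj js)) = sigma k.
Proof.
elim: js => [|j js IH] hjs.
  by rewrite /Tj /= ecomp_idl ecomp_idr.
rewrite Tj_rev_cons Tj_cons.
apply: (@key_gen _ (@ecomp k) (eid k)); [exact: ecompA|exact: ecomp_idl|exact: sigma2| |].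
  by apply: inI_inv; apply: hjs; rewrite inE eqxx.
by apply: IH => i hi; apply: hjs; rewrite inE hi orbT.
Qed.

Lemma main_eq_gen (T : Type) (op : T -> T -> T) (e : T) (opA : forall x y z, op (op x y) z = op x (op y z))
  (t0 L S R q2 W P : T) : op (op R q2) W = P ->
  op t0 (op (op L (op S R)) (op q2 W)) = op (op t0 L) (op S P).
Proof. by move=> <-; rewrite !opA. Qed.

Lemma inv_gen (T : Type) (op : T -> T -> T) (e : T) (opA : forall x y z, op (op x y) z = op x (op y z))
  (op1 : forall x, op e x = x) (op1r : forall x, op x e = x)
  (f g t1 t1' t2 t2' S A B : T) :
  f = op t1 (op S (op B t2)) -> op t1' t1 = e -> op t2' t2 = e -> op S S = e ->
  op A (op S B) = S -> op f g = e ->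
  g = op t2' (op S (op A t1')).
Proof.
move=> hf h1 h2 hS hAB hfg.
have hhf : op (op t2' (op S (op A t1'))) f = e.
  rewrite hf !opA -(opA t1' t1) h1 op1 -(opA A S) -(opA (op A S) B) (opA A S B) hAB.
  by rewrite -(opA S S) hS op1 h2.
by rewrite -[g]op1 -hhf opA hfg op1r.
Qed.
End S.

Unset Implicit Arguments.
Set Strict Implicit.
Theorem proposition4p10 (k : fieldType) (f : endo k) (n : nat) :
  is_aut f -> affine_length_is f n.+1 ->
  exists (tau1 tau2 : endo k) (js : seq (endo k)),
    [/\ inB tau1, inB tau2, size js = n, (forall i, i \in js -> inI i) &
    f = ecomp_list (tau1 :: sigma k
          :: flatten (map (fun i => [:: i; sigma k]) js) ++ [:: tau2])]
    /\
    (* in particular: *)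
    (forall tau1' tau2' g : endo k,
       is_inverse tau1 tau1' -> is_inverse tau2 tau2' -> is_inverse f g ->
       g = ecomp_list (tau2' :: sigma k
             :: flatten (map (fun i => [:: i; sigma k]) (rev js)) ++ [:: tau1'])).
Proof.
move=> _ [t0 [ats [hsz [hf ht0 HA HB HL]]]].
have gd := decomp_good HA HB HL.
case: ats hsz hf gd {HA HB HL} => [//|q r] /= [hsz] hf [[hA nB] hq2 hr gr].
have [L [R [hL hR eq1]]] := split_A hA nB.
have hG : gcond r (ecomp R q.2).
  rewrite /gcond; case: r hr {hsz hf gr} => [|q' r] hr.
    by apply: BB => //; exact: Bsz_inB hR.
  by apply: lin_big => //; apply: notA_big.
have [tau2 [js [ht2 hjs_sz hjs heq]]] := H_lemma gr hG.
have hf' : f = ecomp (ecomp t0 L) (ecomp (sigma k) (Pj js tau2)).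
  rewrite hf -/(pairs r) eq1.
  exact: (@main_eq_gen _ (@ecomp k) (eid k) (@ecompA k)).
exists (ecomp t0 L), tau2, js; split.
  split; [exact: BB ht0 (Bsz_inB hL) | exact: ht2 | by rewrite hjs_sz | exact: hjs |].
  exact: hf'.
move=> tau1' tau2' g [_ h1] [_ h2] [hfg _].
change (g = ecomp tau2' (ecomp (sigma k) (Pj (rev js) tau1'))).
rewrite Pj_T.
rewrite Pj_T in hf'.
exact: (@inv_gen _ (@ecomp k) (eid k) (@ecompA k) (@ecomp_idl k) (@ecomp_idr k) _ _ _ _ _ _ _ _ _
   hf' h1 h2 (@sigma2 k) (key hjs) hfg).
Qed.
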